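(* Let $G=K\rtimes H$ be a Frobenius group with kernel $K$ such that the cardinality of the Frobenius complements is different from $|K|-1$. There is an absolute constant $c>0$ such that for every $0<\varepsilon\le 1/2$ and every $\ell$ with $c\log|K|\log(1/\varepsilon)\le\ell\le|K|$, a uniformly random subset $B\subseteq K$ of size $\ell$ is an $\mathcal{FC}$-strong base (for the action $\circ$) with probability at least $1-\varepsilon$.
   Context: A Frobenius group is a finite group $G$ acting transitively on a finite set such that only the identity has more than one fixed point and some nontrivial element fixes a point; its kernel $K$ (identity plus fixed-point-free elements) is normal, and a Frobenius complement $H$ (a point stabilizer) satisfies $K\cap H=\{1\}$, $G=KH$. The action $\circ$ of $G$ on $K$: for $g=yh$ with $y\in K,h\in H$, $g\circ x=yhxh^{-1}$. $\mathcal{FC}$ is the family of Frobenius complements $\{xHx^{-1}:x\in K\}$ (the stabilizers of the points of $K$). $G_m$ is the stabilizer of $m\in K$. A set $B\subseteq K$ is an $H'$-strong base if $\bigcap_{m\in B}H'G_{g\circ m}=H'$ for every $g\in G$, and an $\mathcal{FC}$-strong base if it is $H'$-strong for every $H'\in\mathcal{FC}$. *)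

(* Defs.v *)
From Stdlib Require Import Reals.
From mathcomp Require Import all_boot all_fingroup all_solvable.
Set Implicit Arguments. Unset Strict Implicit. Unset Printing Implicit Defensive.
Local Open Scope group_scope.

Section FrobAct.
Variable gT : finGroupType.
Implicit Types (K H : {group gT}) (g x m : gT) (B : {set gT}).

Definition kpart K H g : gT := odflt 1 [pick y in K | y^-1 * g \in H].
Definition hpart K H g : gT := (kpart K H g)^-1 * g.

(* g o x = y h x h^-1  (note: in MathComp  x ^ z = z^-1 * x * z) *)
Definition frob_act K H g x : gT := kpart K H g * (x ^ (hpart K H g)^-1).

Definition frob_stab (G K H : {group gT}) m : {set gT} :=
  [set g in G | frob_act K H g m == m].

Definition strong_base_for (G K H H' : {group gT}) B : bool :=
  [forall g in G,
     \bigcap_(m in B) ((H' : {set gT}) * frob_stab G K H (frob_act K H g m))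
       == (H' : {set gT})].

(* B is an FC-strong base, FC = { x H x^-1 : x in K } *)
Definition FC_strong_base (G K H : {group gT}) B : bool :=
  [forall x in K, strong_base_for G K H (H :^ x^-1)%G B].

Definition n_good_bases (G K H : {group gT}) (l : nat) : nat :=
  #|[set B : {set gT} | [&& B \subset K, #|B| == l & FC_strong_base G K H B]]|.
End FrobAct.

(* Main.v *)
Require Import Defs.
From Stdlib Require Import Reals Lra Psatz.
From mathcomp Require Import all_boot all_fingroup all_solvable zify.
Set Implicit Arguments. Unset Strict Implicit. Unset Printing Implicit Defensive.

Lemma card_bigcup_le (I T : finType) (A : {pred I}) (F : I -> {set T}) :
  (#|\bigcup_(i in A) F i| <= \sum_(i in A) #|F i|)%N.
Proof.
elim/big_rec2: _ => [|i U s _ IH]; first by rewrite cards0.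
by rewrite cardsU (leq_trans (leq_subr _ _)) // leq_add2l.
Qed.

Lemma bin_half l : forall t n, (2 * t <= n -> 2 ^ l * 'C(t, l) <= 'C(n, l))%N.
Proof.
elim: l => [|l IH] t n h; first by rewrite !bin0.
case: t h => [|t] h; first by rewrite bin0n muln0.
rewrite -(leq_pmul2l (ltn0Sn l)) -!mul_bin_diag /=.
have h1 : (2 * t <= n.-1)%N by lia.
have := IH _ _ h1.
rewrite expnS.
have : (2 * t.+1 <= n)%N := h.
move=> A B; have := leq_mul A B.
move=> C; rewrite mulnCA -mul_bin_diag /=; apply: leq_trans C; apply: eq_leq.
by rewrite -!mulnA; congr (_ * _); exact: mulnCA.
Qed.

Section Grp.
Local Open Scope group_scope.
Variables (gT : finGroupType) (G K H : {group gT}).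
Hypothesis frobG : [Frobenius G = K ><| H].

Let ctx := sdprod_context (eqP (proj1 (andP frobG))).

Lemma kpart_spec g : g \in G -> kpart K H g \in K /\ hpart K H g \in H.
Proof.
move=> Gg; rewrite /hpart /kpart.
case: pickP => [y /andP[Ky Hy] | none] /=; first by [].
have [_ _ defG _ _] := ctx.
move: Gg; rewrite -defG => /mulsgP[k h Kk Hh def_g].
by move: (none k); rewrite /= def_g Kk mulKg Hh.
Qed.

Lemma hpartE g : kpart K H g * hpart K H g = g.
Proof. by rewrite /hpart mulKVg. Qed.

Lemma kpart1 : kpart K H 1 = 1.
Proof.
have [_ _ _ _ tiKH] := ctx.
rewrite /kpart; case: pickP => [y /andP[Ky Hy] | _] //=.
apply/eqP; rewrite -(eq_invg1 y) -in_set1 -set1gE -tiKH inE groupV Ky.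
by rewrite mulg1 in Hy.
Qed.

Lemma act1 m : frob_act K H 1 m = m.
Proof. by rewrite /frob_act /hpart kpart1 mulg1 !invg1 conjg1 mul1g. Qed.

Lemma act_inj g : injective (frob_act K H g).
Proof. by move=> x y; rewrite /frob_act => /mulgI /conjg_inj. Qed.

Lemma act_in g m : g \in G -> m \in K -> frob_act K H g m \in K.
Proof.
move=> Gg Km; have [Kk Hh] := kpart_spec Gg.
have [_ _ _ nKH _] := ctx.
rewrite /frob_act groupM // memJ_norm // groupV (subsetP nKH) //.
Qed.

Lemma fix_uniq s m1 m2 : s \in G -> s != 1 -> m1 \in K -> m2 \in K ->
  frob_act K H s m1 = m1 -> frob_act K H s m2 = m2 -> m1 = m2.
Proof.
move=> Gs ns1 Km1 Km2; have [Kk Hh] := kpart_spec Gs.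
rewrite /frob_act; set k := kpart K H s; set h := hpart K H s.
move=> e1 e2.
have ek: forall m, k * m ^ h^-1 = m -> k = m * (m ^ h^-1)^-1.
  by move=> m e; rewrite -{1}e mulgK.
have E := etrans (esym (ek _ e1)) (ek _ e2).
have hw : (m2^-1 * m1) ^ h^-1 = m2^-1 * m1.
  have E' : m2^-1 * m1 * (m1 ^ h^-1)^-1 = (m2 ^ h^-1)^-1 by rewrite -mulgA E mulKg.
  by rewrite conjMg conjVg -E' mulgKV.
case: (eqVneq h 1) => [h1 | nh1].
  have : k = 1 by rewrite (ek _ e1) h1 invg1 conjg1 mulgV.
  by move=> k1; move: ns1; rewrite -(hpartE s) -/k -/h k1 h1 mulg1 eqxx.
have reg := Frobenius_reg_ker frobG.
have hH : h \in H^# by apply/setD1P.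
have : m2^-1 * m1 \in 'C_K[h].
  rewrite inE groupM ?groupV //=; apply/cent1P.
  rewrite -[h]invgK; apply: commuteV.
  by rewrite /commute -{2}hw conjgE !mulgA mulgV mul1g.
rewrite (reg h hH) inE => /eqP/(canRL (mulKVg m2)); by rewrite mulg1.
Qed.


Lemma stab_sub m : frob_stab G K H m \subset G.
Proof. by apply/subsetP => y; rewrite inE => /andP[]. Qed.

Lemma one_stab m : 1 \in frob_stab G K H m.
Proof. by rewrite inE group1 act1 eqxx. Qed.

Lemma card_T (L : {group gT}) g z : g \in G ->
  #|[set m in K | (z \notin L) && (z \in (L : {set gT}) * frob_stab G K H (frob_act K H g m))]|
   <= #|L|.
Proof.
move=> Gg.
set T := [set m in K | _].
have [zL | nzL] := boolP (z \in L).
  have -> : T = set0 by apply/setP => m; rewrite !inE zL /= andbF.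
  by rewrite cards0.
pose F m := odflt 1 [pick s in (L :* z) :&: frob_stab G K H (frob_act K H g m)].
have FP : forall m, m \in T -> F m \in (L :* z) :&: frob_stab G K H (frob_act K H g m).
  move=> m; rewrite inE => /andP[Km /andP[_ /mulsgP[l s Ll Ss ez]]].
  rewrite /F; case: pickP => [s' Hs' | none] //=.
  move: (none s); rewrite /= inE Ss andbT mem_rcoset ez invMg mulgA mulgV mul1g.
  by rewrite groupV Ll.
have F1 : forall m, m \in T -> F m != 1.
  move=> m /FP; rewrite inE mem_rcoset => /andP[Hs _]; apply: contraNneq nzL => e.
  by move: Hs; rewrite e mul1g groupV.
have inj : {in T &, injective F}.
  move=> m1 m2 T1 T2 e.
  have := FP _ T1; have := FP _ T2; rewrite !inE -e.
  move=> /andP[_ /andP[Gs f2]] /andP[_ /andP[_ f1]].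
  have Km1 : m1 \in K by move: T1; rewrite inE => /andP[].
  have Km2 : m2 \in K by move: T2; rewrite inE => /andP[].
  apply: (@act_inj g).
  apply: (fix_uniq Gs (F1 _ T1)); try exact: act_in; exact/eqP.
rewrite -(card_in_imset inj) -(card_rcoset L z); apply: subset_leq_card.
apply/subsetP => _ /imsetP[m Tm ->]; have := FP _ Tm; rewrite inE => /andP[].
done.
Qed.

Lemma main_count l : (0 < l)%N -> (2 * #|H| <= #|K|)%N ->
  (2 ^ l * ('C(#|K|, l) - n_good_bases G K H l) <= #|K| ^ 5 * 'C(#|K|, l))%N /\
  (n_good_bases G K H l <= 'C(#|K|, l))%N.
Proof.
move=> l0 h2.
have [/eqP defG _] := andP frobG.
have [nKG sHG _ _ _] := ctx.
have sKG : K \subset G by case/andP: nKG.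
set D := [set B : {set gT} | B \subset K & #|B| == l].
set P := [set B : {set gT} | FC_strong_base G K H B].
have cD : #|D| = 'C(#|K|, l) by rewrite cards_draws.
have eg : n_good_bases G K H l = #|D :&: P|.
  by rewrite /n_good_bases; apply: eq_card => B; rewrite !inE andbA.
have sum := cardsID P D.
pose T x g z := [set m in K | (z \notin (H :^ x^-1)) &&
   (z \in (H :^ x^-1 : {set gT}) * frob_stab G K H (frob_act K H g m))].
have sub : D :\: P \subset \bigcup_(x in K) \bigcup_(g in G) \bigcup_(z in G)
    [set B : {set gT} | B \subset T x g z & #|B| == l].
  apply/subsetP => B; rewrite !inE => /andP[nP /andP[BK /eqP cB]].
  move: nP; rewrite /FC_strong_base => /forall_inPn[x Kx].
  rewrite /strong_base_for => /forall_inPn[g Gg].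
  have sH : (H :^ x^-1 : {set gT}) \subset
     \bigcap_(m in B) ((H :^ x^-1 : {set gT}) * frob_stab G K H (frob_act K H g m)).
    by apply/bigcapsP => m _; apply: mulg_subl; apply: one_stab.
  rewrite eqEsubset sH andbT => /subsetPn[z zI zH].
  have : (0 < #|B|)%N by rewrite cB.
  rewrite card_gt0 => /set0Pn[m0 Bm0].
  move/bigcapP: zI => zI.
  have sHxG : (H :^ x^-1 : {set gT}) \subset G.
    by rewrite -(conjGid (groupVr (subsetP sKG x Kx))) conjSg.
  have Gz : z \in G.
    by apply: (subsetP (mul_subG sHxG (stab_sub _))); apply: zI m0 Bm0.
  apply/bigcupP; exists x => //; apply/bigcupP; exists g => //.
  apply/bigcupP; exists z => //.
  rewrite inE cB eqxx andbT; apply/subsetP => m Bm.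
  by rewrite inE (subsetP BK m Bm) zH /=; apply: zI.
have bnd : (#|D :\: P| <= #|K| * (#|G| * (#|G| * 'C(#|H|, l))))%N.
  apply: leq_trans (subset_leq_card sub) _.
  apply: leq_trans (card_bigcup_le _ _) _.
  apply: leq_trans (_ : _ <= \sum_(x in K) (#|G| * (#|G| * 'C(#|H|, l))))%N _;
    last by rewrite sum_nat_const.
  apply: leq_sum => x Kx.
  apply: leq_trans (card_bigcup_le _ _) _.
  apply: leq_trans (_ : _ <= \sum_(g in G) (#|G| * 'C(#|H|, l)))%N _;
    last by rewrite sum_nat_const.
  apply: leq_sum => g Gg.
  apply: leq_trans (card_bigcup_le _ _) _.
  apply: leq_trans (_ : _ <= \sum_(z in G) 'C(#|H|, l))%N _;
    last by rewrite sum_nat_const.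
  apply: leq_sum => z Gz.
  rewrite cards_draws; apply: leq_bin2l.
  by have := card_T (H :^ x^-1)%G z Gg; rewrite cardJg.
split; last by rewrite eg -cD -sum leq_addr.
have e : ('C(#|K|, l) - n_good_bases G K H l)%N = #|D :\: P|.
  by rewrite eg -cD -sum addKn.
rewrite e.
have hg : (#|G| <= #|K| * #|K|)%N.
  rewrite -(sdprod_card defG) leq_mul2l; apply/orP; right.
  by apply: leq_trans h2; rewrite leq_pmull.
have bh := bin_half l h2.
apply: leq_trans (leq_mul (leqnn (2 ^ l)) bnd) _.

have hh : (#|K| * (#|G| * #|G|) <= #|K| ^ 5)%N.
  have := leq_mul hg hg; rewrite -(leq_pmul2l (cardG_gt0 K)).
  by move/leq_trans; apply; rewrite !expnS expn0 muln1 !mulnA.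
apply: leq_trans (leq_mul hh bh); apply: eq_leq.
by rewrite mulnC -!mulnA [(_ * 2 ^ l)%N]mulnC.
Qed.

Lemma frob_size : (#|H| != #|K|.-1)%N -> (2 * #|H| < #|K|)%N.
Proof.
move=> ne; have := Frobenius_dvd_ker1 frobG.
have [_ ntK _ _ _] := Frobenius_context frobG.
have K1 : (1 < #|K|)%N by rewrite cardG_gt1.
case/dvdnP => q e.
case: q e => [|[|q]] e.
- rewrite mul0n in e; lia.
- by rewrite mul1n in e; rewrite -e eqxx in ne.
- rewrite !mulSn in e; lia.
Qed.
End Grp.

Local Open Scope R_scope.

Lemma ln_le_ x y : 0 < x -> x <= y -> ln x <= ln y.
Proof.
move=> x0 [xy|<-]; last by apply: Rle_refl.
by apply: Rlt_le; apply: ln_increasing.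
Qed.

Lemma exp_le_ x y : x <= y -> exp x <= exp y.
Proof.
move=> [xy|<-]; last by apply: Rle_refl.
by apply: Rlt_le; apply: exp_increasing.
Qed.

Lemma INR_expn m k : INR (m ^ k)%N = INR m ^ k.
Proof.
elim: k => [|k IH]; first by rewrite expn0.
by rewrite expnS mulnE mult_INR IH.
Qed.

Theorem proposition3 :
  exists c : R, 0 < c /\
  forall (gT : finGroupType) (G K H : {group gT}),
    [Frobenius G = K ><| H]%g ->
    (#|H| != #|K|.-1)%N ->
    forall (eps : R) (l : nat),
      0 < eps -> eps <= / 2 ->
      c * ln (INR #|K|) * ln (/ eps) <= INR l ->
      (l <= #|K|)%N ->
      INR (n_good_bases G K H l) / INR 'C(#|K|, l) >= 1 - eps.
Proof.
exists 64; split; first lra.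
move=> gT G K H frobG ne eps l e0 e2 hl lK.
have h2 := frob_size frobG ne.
have H0 : (0 < #|H|)%N by apply: cardG_gt0.
have n3 : 3 <= INR #|K|.
  have h3 : (3 <= #|K|)%N by lia.
  have := le_INR _ _ (elimT leP h3).
  by replace (INR 3) with 3 by (simpl; lra).
have a1 : 1 <= ln (INR #|K|).
  rewrite -{1}(ln_exp 1); apply: ln_le_; first exact: exp_pos.
  by apply: Rle_trans n3; apply: exp_le_3.
have ie : 2 <= / eps.
  rewrite -{1}(Rinv_inv 2); apply: Rinv_le_contravar => //.
have b1 : / 2 <= ln (/ eps).
  apply: Rle_trans (Rlt_le _ _ ln_lt_2) _; apply: ln_le_ => //; lra.
have l2 := ln_lt_2.
set a := ln (INR #|K|) in a1 hl *.
set b := ln (/ eps) in b1 hl *.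
have Lpos : 0 < INR l by nra.
have l0 : (0 < l)%N.
  by case: l Lpos {hl lK} => [|l] //; rewrite /= => /Rlt_irrefl.
have key : INR l * ln 2 >= 5 * a + b by nra.
have [mc gc] := main_count frobG l0 (ltnW h2).
set C := 'C(#|K|, l) in mc gc *.
set g := n_good_bases G K H l in mc gc *.
have Cpos : (0 < C)%N by rewrite bin_gt0.
have mcR : 2 ^ l * (INR C - INR g) <= INR #|K| ^ 5 * INR C.
  have := le_INR _ _ (elimT leP mc).
  rewrite !mulnE !mult_INR !INR_expn subnE minus_INR; last exact/leP.
  replace (INR 2) with 2 by (simpl; lra).
  move=> X; apply: Rle_trans X _; right; ring.
have p2 : 0 < 2 ^ l by apply: pow_lt; lra.
have N0 : 0 < INR #|K| by lra.
have keyR : INR #|K| ^ 5 <= eps * 2 ^ l.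
  rewrite -(exp_ln (INR #|K| ^ 5)); last by apply: pow_lt.
  rewrite -(exp_ln (eps * 2 ^ l)); last by apply: Rmult_lt_0_compat.
  apply: exp_le_; rewrite ln_pow // ln_mult // ln_pow; try lra.
  have lne : ln eps = - b by rewrite /b ln_Rinv //; lra.
  replace (INR 5) with 5 by (simpl; lra).
  rewrite -/a; lra.
have Cr : 0 < INR C by apply: lt_0_INR; apply/leP.
have fin : INR C - INR g <= eps * INR C.
  apply: (Rmult_le_reg_l (2 ^ l)) => //.
  apply: Rle_trans mcR _.
  have := Rmult_le_compat_r (INR C) _ _ (Rlt_le _ _ Cr) keyR.
  lra.
apply: Rle_ge; rewrite /Rdiv.
apply: (Rmult_le_reg_r (INR C)) => //.
rewrite Rmult_assoc Rinv_l; lra.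
Qed.
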